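(* Let $\Gamma_1=(u\xrightarrow{p}x\xrightarrow{q}v)$ be a path of length $2$ in $B(\mathfrak S_n)$, and let $\Gamma_2=(u\xrightarrow{s}y\xrightarrow{t}v)$ be the flip of $\Gamma_1$. Then: (1) if $p$ and $q$ commute, then $s=q$ and $t=p$; (2) if $p=(a,b)$ and $q=(a,c)$ (with $a,b,c$ distinct), then: - if $a<b<c$ or $a>b>c$, then $s=(b,c)$ and $t=(a,b)$; - if $a<c<b$ or $a>c>b$, then $s=(a,c)$ and $t=(b,c)$; - if $b<a<c$ or $b>a>c$, then: if $u^{-1}(b)<u^{-1}(a)<u^{-1}(c)$ or $u^{-1}(c)<u^{-1}(a)<u^{-1}(b)$, then $s=(a,c)$ and $t=(b,c)$; otherwise $s=(b,c)$ and $t=(a,b)$.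
   Context: $\mathfrak S_n$ is the symmetric group on $[n]$, $T$ its set of transpositions, $\ell$ the length w.r.t. simple transpositions $(i,i+1)$. The Bruhat graph $B(\mathfrak S_n)$ is the edge-labelled directed graph on $\mathfrak S_n$ with an edge $x\xrightarrow{t}y$ iff $yx^{-1}=t\in T$ and $\ell(x)<\ell(y)$. For any $x,y\in\mathfrak S_n$ the number of paths of length $2$ from $x$ to $y$ in $B(\mathfrak S_n)$ is $0$ or $2$; if $\Gamma$ is one of two such paths, the other one is called the flip of $\Gamma$. $u^{-1}$ is the inverse permutation. *)

(* Defs.v *)
(* Symmetric group S_n = 'S_n = {perm 'I_n}; [n] = {1..n}
   is modelled by 'I_n = {0..n-1} with the same (order-preserving) ordering. *)
From mathcomp Require Import all_boot all_fingroup.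
Set Implicit Arguments. Unset Strict Implicit. Unset Printing Implicit Defensive.
Local Open Scope group_scope.

Definition is_transp (n : nat) (t : 'S_n) : Prop :=
  exists a b : 'I_n, a != b /\ t = tperm a b.

Definition is_simple (n : nat) (s : 'S_n) : bool :=
  [exists i : 'I_n, exists j : 'I_n, (val j == (val i).+1) && (s == tperm i j)].

Definition word_of_length (n : nat) (x : 'S_n) (k : nat) : bool :=
  [exists w : k.-tuple 'S_n, all (@is_simple n) w && (\prod_(s <- w) s == x)].

(* length w.r.t. simple transpositions: the least k such that x is a product
   of k simple transpositions (every x has such a word of length
   <= n(n-1)/2 <= n*n, so the search below never falls through). *)
Definition len (n : nat) (x : 'S_n) : nat :=
  find (word_of_length x) (iota 0 (n * n).+1).

(* Bruhat graph edge x --t--> y : y x^{-1} = t in T and len x < len y.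
   y x^{-1} = t as functions means y = t o x, i.e. y i = t (x i). *)
Definition bruhat_edge (n : nat) (x t y : 'S_n) : Prop :=
  is_transp t /\ (forall i, y i = t (x i)) /\ len x < len y.

(* Main.v *)
Require Import Defs.
From mathcomp Require Import all_boot all_fingroup zify.
Set Implicit Arguments. Unset Strict Implicit. Unset Printing Implicit Defensive.
Local Open Scope group_scope.

Section Len.
Variable n : nat.
Implicit Types (w x : 'S_n) (i j k l : 'I_n).

Definition inv_set w : {set 'I_n * 'I_n} :=
  [set kl : 'I_n * 'I_n | ((kl.1 < kl.2)%N && (w kl.2 < w kl.1)%N)].
Definition ninv w := #|inv_set w|.

Lemma inv_setE w k l : ((k, l) \in inv_set w) = ((k < l)%N && (w l < w k)%N).
Proof. by rewrite inE. Qed.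

Lemma neqv i j : i <> j -> nat_of_ord i <> nat_of_ord j.
Proof. by move=> H E; apply: H; apply: val_inj. Qed.

Lemma wneq w i j : i <> j -> nat_of_ord (w i) <> nat_of_ord (w j).
Proof. by move=> H E; apply: H; apply: (@perm_inj _ w); apply: val_inj. Qed.

Lemma adj_map w i j k l : nat_of_ord j = (nat_of_ord i).+1 ->
  (k, l) \in inv_set (tperm i j * w) -> (k, l) != (i, j) ->
  ((tperm i j k, tperm i j l) \in inv_set w) && ((tperm i j k, tperm i j l) != (i, j)).
Proof.
move=> Hj; rewrite !inv_setE !permM => /andP[Hkl Hw] Hne.
rewrite Hw andbT.
case: (tpermP i j k) => [Ek|Ek|Eki Ekj]; case: (tpermP i j l) => [El|El|Eli Elj];
  subst; move: Hne; rewrite ?xpair_eqE -?val_eqE /=;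
  repeat match goal with H : ?a <> ?b |- _ => move/neqv: H => H end; lia.
Qed.

Lemma adj_card w i j : nat_of_ord j = (nat_of_ord i).+1 ->
  (#|inv_set (tperm i j * w) :\ (i, j)| <= #|inv_set w :\ (i, j)|)%N.
Proof.
move=> Hj.
pose f := fun kl : 'I_n * 'I_n => (tperm i j kl.1, tperm i j kl.2).
have finj : injective f.
  by move=> [a b] [c d] [/perm_inj -> /perm_inj ->].
rewrite -(card_imset _ finj); apply: subset_leq_card; apply/subsetP => z.
case/imsetP=> [[k l]]; rewrite in_setD1 => /andP[Hne Hin] ->.
by rewrite in_setD1; have /andP[H1 H2] := adj_map Hj Hin Hne; rewrite H1 H2.
Qed.

Lemma adj_le w i j : nat_of_ord j = (nat_of_ord i).+1 ->
  (ninv (tperm i j * w) <= (ninv w).+1)%N.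
Proof.
move=> Hj; rewrite /ninv (cardsD1 (i, j) (inv_set (tperm i j * w))).
have := adj_card w Hj; have := cardsD1 (i, j) (inv_set w).
move=> H1 H2; rewrite H1; clear H1; move: H2.
case: ((i, j) \in _); case: ((i, j) \in _); rewrite /= ?add0n ?add1n ?ltnS => H; rewrite ?ltnS ?(leq_trans H) ?leqnSn //; by do 2 apply: leqW.
Qed.

Lemma adj_desc w i j : nat_of_ord j = (nat_of_ord i).+1 -> (w j < w i)%N ->
  ((ninv (tperm i j * w)).+1 <= ninv w)%N.
Proof.
move=> Hj Hd; rewrite /ninv (cardsD1 (i, j) (inv_set (tperm i j * w))).
have := adj_card w Hj; rewrite (cardsD1 (i, j) (inv_set w)).
rewrite !inv_setE !permM tpermL tpermR Hd /=.
have -> : (nat_of_ord (w i) < w j)%N = false by apply/negbTE; rewrite -leqNgt ltnW.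
rewrite Hj leqnn /= add0n add1n ltnS; exact.
Qed.

Lemma ninv1 : ninv 1 = 0.
Proof.
apply/eqP; rewrite cards_eq0; apply/eqP/setP => [[k l]].
rewrite inv_setE !perm1 inE; apply/negbTE/negP => /andP[H1 H2].
by move: (ltn_trans H1 H2); rewrite ltnn.
Qed.

Lemma prod_le (ws : seq 'S_n) : all (@is_simple n) ws ->
  (ninv (\prod_(s <- ws) s) <= size ws)%N.
Proof.
elim: ws => [|s ws IH]; first by rewrite big_nil ninv1.
rewrite big_cons /= => /andP[Hs Hws].
case/existsP: Hs => i /existsP[j /andP[/eqP Hj /eqP ->]].
by rewrite (leq_trans (adj_le _ Hj)) // ltnS IH.
Qed.

Lemma word_le x (k : nat) : word_of_length x k -> (ninv x <= k)%N.
Proof.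
case/existsP => ws /andP[Hall /eqP <-].
by have := prod_le Hall; rewrite size_tuple.
Qed.

Lemma incr_ge (f : 'I_n -> 'I_n) :
  (forall k l, (nat_of_ord k < nat_of_ord l)%N -> (nat_of_ord (f k) < f l)%N) ->
  forall k, (nat_of_ord k <= f k)%N.
Proof.
move=> H k; have [m Em] : exists m, nat_of_ord k = m by eauto.
elim: m k Em => [|m IH] k Ek; first by rewrite Ek.
have Hm : (m < n)%N by have := ltn_ord k; lia.
have := IH (Ordinal Hm) erefl; have := H (Ordinal Hm) k; rewrite /= Ek; lia.
Qed.

Lemma adj_incr (f : 'I_n -> 'I_n) :
  (forall i j, nat_of_ord j = (nat_of_ord i).+1 -> (nat_of_ord (f i) < f j)%N) ->
  forall k l, (nat_of_ord k < nat_of_ord l)%N -> (nat_of_ord (f k) < f l)%N.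
Proof.
move=> H k l Hkl; have [d Ed] : exists d, nat_of_ord l = (nat_of_ord k + d).+1.
  by exists (l - k.+1)%N; lia.
elim: d l {Hkl} Ed => [|d IH] l Ed; first by apply: H; lia.
have Hm : ((k + d).+1 < n)%N by have := ltn_ord l; lia.
have := IH (Ordinal Hm) erefl; have := H (Ordinal Hm) l; rewrite /= Ed; lia.
Qed.

Lemma ninv0 x : ninv x = 0 -> x = 1.
Proof.
move/eqP; rewrite cards_eq0 => /eqP E.
have Hx : forall k l, (nat_of_ord k < nat_of_ord l)%N -> (nat_of_ord (x k) < x l)%N.
  move=> k l Hkl; have : (k, l) \notin inv_set x by rewrite E inE.
  rewrite inv_setE Hkl /= -leqNgt leq_eqVlt => /orP[/eqP H|//].
  have /(@wneq x _ _) : k <> l by move=> Ek; move: Hkl; rewrite Ek ltnn.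
  by rewrite H.
have Hy : forall k l, (nat_of_ord k < nat_of_ord l)%N ->
    (nat_of_ord (x^-1 k) < x^-1 l)%N.
  move=> k l Hkl; rewrite ltnNge leq_eqVlt; apply/negP => /orP[/eqP H|H].
    have : k = l by rewrite -(permKV x k) -(permKV x l); congr (x _); exact: val_inj.
    by move=> Ek; move: Hkl; rewrite Ek ltnn.
  by have := Hx _ _ H; rewrite !permKV; lia.
apply/permP => m; rewrite perm1; apply: val_inj => /=.
have := incr_ge Hx m; have := incr_ge Hy (x m); rewrite permK; lia.
Qed.

Lemma descent x : (0 < ninv x)%N ->
  exists i j, nat_of_ord j = (nat_of_ord i).+1 /\ (nat_of_ord (x j) < x i)%N.
Proof.
move=> Hpos.
case E: [exists i, exists j, (nat_of_ord j == (nat_of_ord i).+1) && (nat_of_ord (x j) < x i)%N].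
  by case/existsP: E => i /existsP[j /andP[/eqP H1 H2]]; exists i, j.
have Ha : forall i j, nat_of_ord j = (nat_of_ord i).+1 -> (nat_of_ord (x i) < x j)%N.
  move=> i j Hij; move/negbT: E; rewrite negb_exists => /forallP/(_ i).
  rewrite negb_exists => /forallP/(_ j); rewrite Hij eqxx /= -leqNgt leq_eqVlt.
  case/orP=> [/eqP H|//]; have /(@wneq x _ _) : i <> j by move=> Eij; move: Hij; rewrite Eij; lia.
  by rewrite H.
have Hi := adj_incr Ha.
move: Hpos; rewrite card_gt0 => /set0Pn [[k l]]; rewrite inv_setE => /andP[H1 H2].
by have := Hi _ _ H1; lia.
Qed.

Lemma word_ex m x : ninv x = m -> word_of_length x m.
Proof.
elim: m x => [|m IH] x Hx.
  by rewrite (ninv0 Hx); apply/existsP; exists (nil_tuple _); rewrite /= big_nil.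
have Hp : (0 < ninv x)%N by rewrite Hx.
have [i [j [Hj Hd]]] := descent Hp.
set x' := tperm i j * x.
have Hxx : tperm i j * x' = x by rewrite /x' mulgA tperm2 mul1g.
have H1 := adj_desc Hj Hd; have := adj_le x' Hj; rewrite Hxx -/x' => H2.
have /IH : ninv x' = m by move: H1 H2; rewrite -/x' Hx; lia.
case/existsP => ws /andP[Hall /eqP Hprod].
apply/existsP; exists (cons_tuple (tperm i j) ws).
rewrite /= big_cons Hprod Hxx eqxx Hall andbT.
by rewrite andbT; apply/existsP; exists i; apply/existsP; exists j; rewrite eqxx andbT; apply/eqP.
Qed.

Lemma find_iota_min (P : pred nat) N m : (m < N)%N -> P m ->
  (forall k : nat, (k < m)%N -> ~~ P k) -> find P (iota 0 N) = m.
Proof.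
move=> HmN Pm Hk; rewrite -(subnKC (ltnW HmN)) iotaD find_cat.
have -> : has P (iota 0 m) = false.
  apply/negbTE; apply/hasPn => k; rewrite mem_iota => /andP[_ H]; apply: Hk; lia.
rewrite size_iota add0n; case E: (N - m)%N => [|r]; first by lia.
by rewrite /= Pm addn0.
Qed.

Lemma lenE x : len x = ninv x.
Proof.
rewrite /len; apply: find_iota_min.
- rewrite ltnS; have := max_card (mem (inv_set x)).
  by rewrite card_prod card_ord.
- exact: word_ex.
- by move=> k Hk; apply/negP => H; have := word_le H; lia.
Qed.

Lemma ninvV_le x : (ninv x <= ninv x^-1)%N.
Proof.
pose f := fun kl : 'I_n * 'I_n => (x kl.2, x kl.1).
have finj : injective f.
  by move=> [a b] [c d] [/perm_inj -> /perm_inj ->].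
rewrite /ninv -(card_imset _ finj); apply: subset_leq_card; apply/subsetP => z.
case/imsetP=> [[k l]]; rewrite inv_setE => /andP[H1 H2] ->.
by rewrite inv_setE /= !permK H1 H2.
Qed.

Lemma ninvV x : ninv x^-1 = ninv x.
Proof.
apply/eqP; rewrite eqn_leq ninvV_le andbT.
by have := ninvV_le x^-1; rewrite invgK.
Qed.

Lemma tr_le w i j : (nat_of_ord i < nat_of_ord j)%N -> (nat_of_ord (w i) < w j)%N ->
  (ninv w <= ninv (tperm i j * w))%N.
Proof.
move=> Hij Hw.
pose t := tperm i j.
pose f := fun kl : 'I_n * 'I_n =>
  if (nat_of_ord (t kl.1) < t kl.2)%N then (t kl.1, t kl.2) else kl.
have finj : {in inv_set w &, injective f}.
  move=> [a b] [c d]; rewrite !inv_setE /f /= => /andP[Hab _] /andP[Hcd _].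
  case E1: (nat_of_ord (t a) < t b)%N; case E2: (nat_of_ord (t c) < t d)%N.
  - by case=> /perm_inj -> /perm_inj ->.
  - case=> Ea Eb; move: E2; rewrite -Ea -Eb !tpermK; lia.
  - case=> Ea Eb; move: E1; rewrite Ea Eb !tpermK; lia.
  - by [].
rewrite /ninv -(card_in_imset finj); apply: subset_leq_card; apply/subsetP => z.
case/imsetP=> [[k l]]; rewrite inv_setE => /andP[H1 H2] ->.
rewrite /f /=; case E: (nat_of_ord (t k) < t l)%N.
  by rewrite inv_setE /= E !permM !tpermK.
rewrite inv_setE /= H1 !permM /=.
move: E; rewrite /t.
case: (tpermP i j k) => [Ek|Ek|Eki Ekj]; case: (tpermP i j l) => [El|El|Eli Elj];
  subst => //=;
  repeat match goal with H : ?a <> ?b |- _ => move/neqv: H => H end; try lia.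
Qed.
End Len.

Lemma edge_perm n (w t w' : 'S_n) : bruhat_edge w t w' -> w' = w * t.
Proof. by case=> _ [H _]; apply/permP => k; rewrite permM H. Qed.

Lemma inv_edge n (w w' : 'S_n) c d k : w' = w * tperm c d ->
  w'^-1 k = w^-1 (tperm c d k).
Proof. by move=> ->; rewrite invMg tpermV permM. Qed.

Lemma edge_lt n (w w' : 'S_n) c d : bruhat_edge w (tperm c d) w' ->
  (nat_of_ord c < nat_of_ord d)%N -> (nat_of_ord (w^-1 c) < w^-1 d)%N.
Proof.
move=> He Hcd; have E := edge_perm He; case: He => _ [_ Hl].
rewrite !lenE in Hl.
rewrite ltnNge leq_eqVlt; apply/negP => /orP[/eqP H|H].
  have : c = d by apply: (@perm_inj _ w^-1); apply: val_inj.
  by move=> Ecd; move: Hcd; rewrite Ecd ltnn.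
have H1 : (nat_of_ord (w'^-1 c) < w'^-1 d)%N.
  by rewrite !(inv_edge _ E) tpermL tpermR.
have := tr_le Hcd H1.
have -> : tperm c d * w'^-1 = w^-1 by rewrite E invMg tpermV mulgA tperm2 mul1g.
by rewrite !ninvV; lia.
Qed.

Lemma edge_iff n (w w' : 'S_n) c d : bruhat_edge w (tperm c d) w' -> c != d ->
  ((nat_of_ord c < nat_of_ord d)%N <-> (nat_of_ord (w^-1 c) < w^-1 d)%N).
Proof.
move=> He Hne; split; first exact: edge_lt He.
move=> H; case: (ltngtP c d) => // [Hdc|Ecd].
  rewrite tpermC in He; have := edge_lt He Hdc; lia.
by move: Hne; rewrite (val_inj Ecd) eqxx.
Qed.

Lemma moved n (s t : 'S_n) e f : e != f -> s = tperm e f -> is_transp t ->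
  s * t <> 1 -> (s * t) e <> e.
Proof.
move=> Hef -> [g [h [Hgh ->]]] H1; rewrite permM tpermL => H.
apply: H1; move: H Hef Hgh.
case: (tpermP g h f) => [Ef|Ef|Efg Efh]; move=> E; subst.
- by rewrite tpermC tperm2.
- by rewrite tperm2.
- by rewrite eqxx.
Qed.

Ltac close_contra :=
  match goal with
  | H : ?a <> ?a |- _ => by case: (H erefl)
  | H : tperm ?a ?b <> tperm ?b ?a |- _ => by case: (H (tpermC a b))
  end.

Ltac tp_step :=
  match goal with
  | H : context [fun_of_perm (tperm ?x ?y) ?z] |- _ =>
      is_var z; revert H; case: (tpermP x y z); intros; subst
  | |- context [fun_of_perm (tperm ?x ?y) ?z] =>
      is_var z; case: (tpermP x y z); intros; subst
  end.

Ltac brute := repeat (try close_contra; tp_step); try close_contra.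

Theorem proposition3p6 (n : nat) (u x y v p q s t : 'S_n) :
  bruhat_edge u p x -> bruhat_edge x q v ->
  bruhat_edge u s y -> bruhat_edge y t v -> y <> x ->
  ((p * q = q * p)%g -> s = q /\ t = p) /\
  (forall a b c : 'I_n, a != b -> a != c -> b != c ->
     p = tperm a b -> q = tperm a c ->
     (((a < b < c)%N \/ (c < b < a)%N) -> s = tperm b c /\ t = tperm a b) /\
     (((a < c < b)%N \/ (b < c < a)%N) -> s = tperm a c /\ t = tperm b c) /\
     (((b < a < c)%N \/ (c < a < b)%N) ->
        (((((u^-1)%g b < (u^-1)%g a < (u^-1)%g c)%N \/
           ((u^-1)%g c < (u^-1)%g a < (u^-1)%g b)%N) ->
            s = tperm a c /\ t = tperm b c) /\
         (~ (((u^-1)%g b < (u^-1)%g a < (u^-1)%g c)%N \/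
             ((u^-1)%g c < (u^-1)%g a < (u^-1)%g b)%N) ->
            s = tperm b c /\ t = tperm a b)))).
Proof.
move=> H1 H2 H3 H4 Hyx.
have Ex := edge_perm H1; have Ev := edge_perm H2.
have Ey := edge_perm H3; have Ev' := edge_perm H4.
have Hpq : p * q = s * t.
  have E1 : u^-1 * v = p * q by rewrite Ev Ex -mulgA mulKg.
  have E2 : u^-1 * v = s * t by rewrite Ev' Ey -mulgA mulKg.
  by rewrite -E1 -E2.
have Hpq1 : p * q <> 1.
  move=> E; have Evu : v = u by rewrite Ev Ex -mulgA E mulg1.
  case: H1 => _ [_ L1]; case: H2 => _ [_ L2]; rewrite Evu in L2; lia.
have Hsp : s <> p by move=> E; apply: Hyx; rewrite Ey Ex E.
have G : forall k, t (s k) = q (p k) by move=> k; rewrite -!permM Hpq.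
have Ts := H3.1; have Tt := H4.1.
have [e [f [Hef Es]]] := Ts.
have Me : q (p e) <> e.
  by rewrite -permM Hpq; apply: (moved Hef Es Tt); rewrite -Hpq.
have Mf : q (p f) <> f.
  rewrite -permM Hpq; apply: (moved (f := e) _ _ Tt); rewrite -?Hpq //.
    by rewrite eq_sym. by rewrite Es tpermC.
have [g [h [Hgh Et]]] := Tt.
split.
  move=> Hc.
  have [a [b [Hab Ep]]] := H1.1; have [c [d [Hcd Eq]]] := H2.1.
  have Hc' : forall k, q (p k) = p (q k) by move=> k; rewrite -!permM Hc.
  have Hne1 : tperm a b <> tperm c d by move=> E; apply: Hpq1; rewrite Ep Eq E tperm2.
  have Hne2 : tperm a b <> tperm d c by move=> E; apply: Hpq1; rewrite Ep Eq E tpermC tperm2.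
  have Hs : s = q.
    move/eqP: Hab => Hab; move/eqP: Hcd => Hcd; move/eqP: Hef => Hef; move/eqP: Hgh => Hgh.
    rewrite Es Et Ep Eq in G Hc' Me Mf Hsp *.
    have Dac : a <> c.
      move=> E; have Ca := Hc' a; have Cb := Hc' b; clear -E Ca Cb Hab Hcd Hne1 Hne2; subst; brute.
    have Dad : a <> d.
      move=> E; have Ca := Hc' a; have Cb := Hc' b; clear -E Ca Cb Hab Hcd Hne1 Hne2; subst; brute.
    have Dbc : b <> c.
      move=> E; have Ca := Hc' a; have Cb := Hc' b; clear -E Ca Cb Hab Hcd Hne1 Hne2; subst; brute.
    have Dbd : b <> d.
      move=> E; have Ca := Hc' a; have Cb := Hc' b; clear -E Ca Cb Hab Hcd Hne1 Hne2; subst; brute.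
    have Ie : e = a \/ e = b \/ e = c \/ e = d.
      clear -Me Hab Hcd Dac Dad Dbc Dbd; brute; tauto.
    have If : f = a \/ f = b \/ f = c \/ f = d.
      clear -Mf Hab Hcd Dac Dad Dbc Dbd; brute; tauto.
    have Ga := G a; have Gb := G b; have Gc := G c; have Gd := G d.
    clear -Ga Gb Gc Gd Hsp Hab Hcd Hef Hgh Dac Dad Dbc Dbd Ie If.
    case: Ie => [|[|[|]]] ?; case: If => [|[|[|]]] ?; subst; brute;
      first [reflexivity | apply: tpermC].
  split => //; apply: (mulgI q); rewrite -{1}Hs -Hpq; exact: Hc.
move=> a b c Hab Hac Hbc Ep Eq.
have Cand : (s = tperm b c /\ t = tperm a b) \/ (s = tperm a c /\ t = tperm b c).
  rewrite Es Et; rewrite Ep Eq in G Me Mf Hsp; rewrite Es in Hsp; rewrite Es Et in G.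
  move/eqP: Hab => Hab; move/eqP: Hac => Hac; move/eqP: Hbc => Hbc.
  move/eqP: Hef => Hef; move/eqP: Hgh => Hgh.
  have Ie : e = a \/ e = b \/ e = c by clear -Me Hab Hac Hbc; brute; tauto.
  have If : f = a \/ f = b \/ f = c by clear -Mf Hab Hac Hbc; brute; tauto.
  have Ga := G a; have Gb := G b; have Gc := G c.
  clear -Ga Gb Gc Hsp Hab Hac Hbc Hef Hgh Ie If.
  case: Ie => [|[|]] ?; case: If => [|[|]] ?; subst; brute;
    first [by left; split; first [reflexivity|apply: tpermC]
          | by right; split; first [reflexivity|apply: tpermC]].
have Hba : b != a by rewrite eq_sym.
have Hca : c != a by rewrite eq_sym.
have Hcb : c != b by rewrite eq_sym.
have Dab := @wneq n u^-1 a b (elimN eqP Hab).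
have Dac := @wneq n u^-1 a c (elimN eqP Hac).
have Dbc := @wneq n u^-1 b c (elimN eqP Hbc).
have H1' := H1; rewrite Ep in H1'; have O1 := edge_iff H1' Hab.
have H2' := H2; rewrite Eq in H2'; have O2 := edge_iff H2' Hac.
rewrite Ep in Ex; rewrite !(inv_edge _ Ex) tpermL tpermD // in O2.
case: Cand => [[Es' Et']|[Es' Et']].
- have H3' := H3; rewrite Es' in H3'; have O3 := edge_iff H3' Hbc.
  have H4' := H4; rewrite Et' in H4'; have O4 := edge_iff H4' Hab.
  rewrite Es' in Ey; rewrite !(inv_edge _ Ey) tpermL tpermD // in O4.
  rewrite Es' Et'.
  split; [|split]; move=> H; try split; try move=> H';
    first [split; reflexivity | exfalso; lia].
- have H3' := H3; rewrite Es' in H3'; have O3 := edge_iff H3' Hac.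
  have H4' := H4; rewrite Et' in H4'; have O4 := edge_iff H4' Hbc.
  rewrite Es' in Ey; rewrite !(inv_edge _ Ey) tpermR tpermD // in O4.
  rewrite Es' Et'.
  split; [|split]; move=> H; try split; try move=> H';
    first [split; reflexivity | exfalso; lia].
Qed.
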